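(* Let $D$ be a finite set of documents, each document being a finite set of terms, and let $m$ be a positive integer dividing $|D|$. For a bijection $\pi$ assigning to the documents the identifiers $1,\dots,|D|$, let $\mathcal{P}(\pi)$ be the total Delta-encoded size of all postings lists of the single-node index in which document $d$ has identifier $\pi(d)$. For a partition $g$ of $D$ into $m$ disjoint sets (nodes) of $|D|/m$ documents each, let $\mathcal{P}^m(\pi,g)$ be the sum over the $m$ nodes of the total Delta-encoded size of all postings lists of that node's index, where within each node the documents receive identifiers $1,\dots,|D|/m$ in the order induced by $\pi$. If $\pi$ is drawn uniformly at random among all $|D|!$ bijections and, independently, $g$ is drawn uniformly at random among all such equal partitions, then \[\mathbb{E}_{\pi,g}\left[\mathcal{P}(\pi)-\mathcal{P}^m(\pi,g)\right]\ \ge\ 0\ .\]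
   Context: Index model: for an index over a set of documents with distinct identifiers, the postings list of a term $t$ consists of the identifiers $1\le d^t_1<d^t_2<\dots<d^t_{n_t}$ of the documents containing $t$; its encoded size is $\delta(d^t_1)+\sum_{j=2}^{n_t}\delta(d^t_j-d^t_{j-1})$, where for a positive integer $k$ the Delta encoding length is $\delta(k)=1+\lfloor\log_2 k\rfloor+2\lfloor\log_2(1+\lfloor\log_2 k\rfloor)\rfloor$. The total size of an index is the sum of the encoded sizes of the postings lists of all terms occurring in its documents (no dictionary overhead is counted). *)

(* Defs.v *)
From mathcomp Require Import all_boot all_order all_algebra.
Set Implicit Arguments. Unset Strict Implicit. Unset Printing Implicit Defensive.
Import GRing.Theory Num.Theory.

(* Delta code length: delta k = 1 + floor(log2 k) + 2 floor(log2 (1 + floor(log2 k))),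
   for k >= 1 (trunc_log 2 k = floor (log2 k) for k >= 1). *)
Definition delta (k : nat) : nat :=
  1 + trunc_log 2 k + 2 * trunc_log 2 (1 + trunc_log 2 k).

Fixpoint gaps_size (prev : nat) (s : seq nat) : nat :=
  match s with
  | [::] => 0
  | x :: s' => delta (x - prev) + gaps_size x s'
  end.

Definition postings_size (s : seq nat) : nat := gaps_size 0 s.

Section Index.
Variables (Doc Term : finType) (terms : Doc -> {set Term}).

Definition postings (S : {set Doc}) (id : Doc -> nat) (t : Term) : seq nat :=
  sort leq [seq id d | d in [set d in S | t \in terms d]].

Definition index_size (S : {set Doc}) (id : Doc -> nat) : nat :=
  \sum_(t in \bigcup_(d in S) terms d) postings_size (postings S id t).

(* Bijections from documents to identifiers 1..|D| (pi d = value + 1). *)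
Definition bijections : {set {ffun Doc -> 'I_#|Doc|}} :=
  [set f : {ffun Doc -> 'I_#|Doc|} | injectiveb f].

Definition P1 (pi : {ffun Doc -> 'I_#|Doc|}) : nat :=
  index_size setT (fun d => (pi d).+1).

Definition equal_partitions (m : nat) : {set {set {set Doc}}} :=
  [set g | [&& partition g [set: Doc], #|g| == m &
               [forall B in g, #|B| == #|Doc| %/ m]]].

Definition local_id (pi : {ffun Doc -> 'I_#|Doc|}) (B : {set Doc}) (d : Doc) : nat :=
  #|[set d' in B | (pi d' <= pi d)%N]|.

Definition Pm (pi : {ffun Doc -> 'I_#|Doc|}) (g : {set {set Doc}}) : nat :=
  \sum_(B in g) index_size B (local_id pi B).

Definition expected_gain (m : nat) : rat :=
  ((\sum_(pi in bijections) \sum_(g in equal_partitions m)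
      ((P1 pi)%:R - (Pm pi g)%:R : rat))
  / (#|bijections| * #|equal_partitions m|)%N%:R)%R.

End Index.

(* Main.v *)
Require Import Defs.
From mathcomp Require Import all_boot all_order all_algebra all_fingroup.
Import GRing.Theory Num.Theory.

Lemma delta_mono a b : a <= b -> delta a <= delta b.
Proof.
move=> ab; rewrite /delta; apply: leq_add; first by rewrite leq_add2l leq_trunc_log.
by rewrite leq_mul2l leq_trunc_log ?orbT // ltnS leq_trunc_log.
Qed.

Lemma gaps_sizeE p s : sorted ltn s -> all (leq p) s ->
  gaps_size p s = \sum_(x <- s) delta (x - maxn p (\max_(y <- s | y < x) y)).
Proof.
elim: s p => [|x s IH] p; first by rewrite big_nil.
move=> /= pxs /andP[px ps].
have xs : all (ltn x) s by apply: order_path_min pxs; exact: ltn_trans.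
rewrite big_cons IH ?(path_sorted pxs) //; last first.
  by apply/allP=> y ys; apply: ltnW; move/allP: xs; apply.
congr (_ + _).
  rewrite big_cons ltnn big_seq_cond big1 ?maxn0 // => y /andP[ys yx].
  by move/allP: xs => /(_ y ys) /=; rewrite ltnNge (ltnW yx).
rewrite !big_seq; apply: eq_bigr => z zs.
have xz : x < z by exact: (allP xs z zs).
by rewrite big_cons xz maxnA (maxn_idPr px).
Qed.

Section P.
Variables (Doc Term : finType) (terms : Doc -> {set Term}).

Lemma postings_sizeE (S : {set Doc}) (id : Doc -> nat) t :
  {in [set d in S | t \in terms d] &, injective id} ->
  postings_size (postings terms S id t) =
  \sum_(d in [set d in S | t \in terms d])
     delta (id d - \max_(d' in [set d in S | t \in terms d] | id d' < id d) id d').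
Proof.
set A := [set d in S | t \in terms d] => inj.
rewrite /postings_size /postings -/A.
set s0 := [seq id d | d in A].
have us0 : uniq s0 by rewrite map_inj_in_uniq ?enum_uniq // => x y; rewrite !mem_enum; apply: inj.
rewrite gaps_sizeE; last first.
- by apply/allP.
- by rewrite ltn_sorted_uniq_leq sort_uniq us0 sort_sorted //; exact: leq_total.
rewrite (perm_big _ (permEl (perm_sort leq s0))) /s0 big_map big_enum /=.
apply: eq_bigr => d _; rewrite max0n (perm_big _ (permEl (perm_sort leq _))) big_map big_enum_cond //.
Qed.

Lemma index_sizeE (S : {set Doc}) (id : Doc -> nat) :
  Defs.index_size terms S id = \sum_(t : Term) postings_size (postings terms S id t).
Proof.
rewrite /index_size [RHS](bigID (mem (\bigcup_(d in S) terms d))) /=.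
rewrite [X in _ = _ + X]big1 ?addn0 // => t tU.
have E : [set d in S | t \in terms d] = set0.
  apply/setP=> d; rewrite !inE; apply/negP=> /andP[dS td].
  by move/negP: tU; apply; apply/bigcupP; exists d.
rewrite /postings E.
have -> : [seq id d | d in (set0 : {set Doc})] = [::].
  by apply: size0nil; rewrite size_image cards0.
by [].
Qed.
End P.

Section Two.
Variables (Doc Term : finType) (terms : Doc -> {set Term}) (m : nat).
Local Notation N := #|Doc|.
Local Notation k := (#|Doc| %/ m).

Definition mx (pi : {ffun Doc -> 'I_N}) (B : {set Doc}) : nat := \max_(d in B) (pi d : nat).
Definition rk (pi : {ffun Doc -> 'I_N}) (g : {set {set Doc}}) (B : {set Doc}) := #|[set B' in g | mx pi B < mx pi B']|.
Definition sv (pi : {ffun Doc -> 'I_N}) (g : {set {set Doc}}) (d : Doc) := k * rk pi g (pblock g d) + local_id pi (pblock g d) d.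
Definition Psi (pi : {ffun Doc -> 'I_N}) (g : {set {set Doc}}) : {ffun Doc -> 'I_N} := [ffun d => insubd (pi d) (sv pi g d).-1].

Variables (pi : {ffun Doc -> 'I_N}) (g : {set {set Doc}}).
Hypotheses (pi_inj : injective pi) (g_eq : g \in equal_partitions Doc m)
  (m_pos : 0 < m) (N_pos : 0 < N).

Lemma g_part : partition g [set: Doc].
Proof. by move: g_eq; rewrite inE => /and3P[]. Qed.
Lemma g_card : #|g| = m.
Proof. by move: g_eq; rewrite inE => /and3P[_ /eqP]. Qed.
Lemma g_blk (B : {set Doc}) : B \in g -> #|B| = k.
Proof. by move: g_eq; rewrite inE => /and3P[_ _ /forall_inP H] /H /eqP. Qed.
Lemma g_triv : trivIset g.
Proof. by case/and3P: g_part. Qed.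
Lemma N_eq : N = m * k.
Proof.
by rewrite -{1}g_card -(card_uniform_partition g_blk g_part) cardsT.
Qed.
Lemma k_pos : 0 < k.
Proof. by have := N_pos; rewrite {1}N_eq muln_gt0 => /andP[]. Qed.
Lemma pb_in d : pblock g d \in g.
Proof. by apply: pblock_mem; case/and3P: g_part => /eqP -> _ _. Qed.
Lemma in_pb d : d \in pblock g d.
Proof. by rewrite mem_pblock; case/and3P: g_part => /eqP -> _ _. Qed.
Lemma pb_def (B : {set Doc}) d : B \in g -> d \in B -> pblock g d = B.
Proof. exact: def_pblock g_triv. Qed.

Lemma lid_gt0 (B : {set Doc}) d : d \in B -> 0 < local_id pi B d.
Proof. by move=> dB; rewrite card_gt0; apply/set0Pn; exists d; rewrite inE dB leqnn. Qed.
Lemma lid_le (B : {set Doc}) d : local_id pi B d <= #|B|.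
Proof. by apply: subset_leq_card; apply/subsetP=> x; rewrite inE => /andP[]. Qed.
Lemma lid_lt (B : {set Doc}) d1 d2 : d2 \in B -> pi d1 < pi d2 -> local_id pi B d1 < local_id pi B d2.
Proof.
move=> d2B lt12; apply: proper_card; apply/properP; split.
  apply/subsetP=> x; rewrite !inE => /andP[-> /leq_trans]; apply; exact: ltnW.
by exists d2; rewrite !inE ?d2B ?leqnn // -ltnNge.
Qed.
Lemma lid_inj (B : {set Doc}) : {in B &, injective (local_id pi B)}.
Proof.
move=> d1 d2 d1B d2B e; apply: pi_inj; apply: val_inj; apply/eqP.
case: ltngtP => // lt; first by have := @lid_lt B d1 d2 d2B lt; rewrite e ltnn.
  by have := @lid_lt B d2 d1 d1B lt; rewrite e ltnn.
Qed.

Lemma mx_at (B : {set Doc}) : B \in g -> exists2 d, d \in B & mx pi B = pi d.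
Proof.
move=> Bg; have : 0 < #|B| by rewrite g_blk // k_pos.
by move/(eq_bigmax_cond (fun d => (pi d : nat))) => [d dB e]; exists d; rewrite // /mx e.
Qed.
Lemma mx_inj : {in g &, injective (mx pi)}.
Proof.
move=> B1 B2 B1g B2g e; have [d1 d1B e1] := mx_at _ B1g; have [d2 d2B e2] := mx_at _ B2g.
have : d1 = d2 by apply: pi_inj; apply: val_inj; rewrite /= -e1 -e2.
by move=> ed; rewrite -(pb_def _ _ B1g d1B) -(pb_def _ _ B2g d2B) ed.
Qed.
Lemma rk_lt (B : {set Doc}) : B \in g -> rk pi g B < m.
Proof.
move=> Bg; rewrite -g_card; apply: proper_card; apply/properP; split.
  by apply/subsetP=> x; rewrite inE => /andP[].
by exists B; rewrite // inE ltnn andbF.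
Qed.
Lemma rk_anti (B1 B2 : {set Doc}) : B1 \in g -> B2 \in g -> mx pi B1 < mx pi B2 -> rk pi g B2 < rk pi g B1.
Proof.
move=> B1g B2g lt; apply: proper_card; apply/properP; split.
  apply/subsetP=> x; rewrite !inE => /andP[-> /=]; exact: ltn_trans.
by exists B2; rewrite !inE ?B2g ?lt // ltnn andbF.
Qed.
Lemma rk_inj : {in g &, injective (rk pi g)}.
Proof.
move=> B1 B2 B1g B2g e; apply: mx_inj => //; apply/eqP; case: ltngtP => // lt.
- by have := rk_anti _ _ B1g B2g lt; rewrite e ltnn.
- by have := rk_anti _ _ B2g B1g lt; rewrite e ltnn.
Qed.

Lemma kr_le r1 r2 a1 a2 : 0 < a1 <= k -> 0 < a2 <= k -> k * r1 + a1 <= k * r2 + a2 ->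
  r1 <= r2.
Proof.
move=> /andP[a10 a1k] /andP[_ a2k] lt; rewrite leqNgt; apply/negP=> r21.
have : k * r2 + a2 < k * r1 + a1.
  apply: leq_ltn_trans (leq_add (leqnn _) a2k) _; rewrite addnC -mulnS.
  apply: (@leq_ltn_trans (k * r1)); first by rewrite leq_mul2l r21 orbT.
  by rewrite -{1}[k * r1]addn0 ltn_add2l.
by rewrite ltnNge lt.
Qed.

Lemma lid_rng d : 0 < local_id pi (pblock g d) d <= k.
Proof. by rewrite lid_gt0 ?in_pb //= -(g_blk _ (pb_in d)) lid_le. Qed.

Lemma sv_bounds d : 0 < sv pi g d <= N.
Proof.
have /andP[l0 lk] := lid_rng d.
rewrite /sv addn_gt0 l0 orbT /= [X in _ <= X]N_eq.
apply: leq_trans (leq_add (leqnn _) lk) _; rewrite addnC -mulnS mulnC leq_mul2r.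
by rewrite (rk_lt _ (pb_in d)) orbT.
Qed.

Lemma sv_inj : injective (sv pi g).
Proof.
move=> d1 d2 e.
have r12 : rk pi g (pblock g d1) = rk pi g (pblock g d2).
  apply/eqP; rewrite eqn_leq; apply/andP; split.
  - by apply: (@kr_le _ _ _ _ (lid_rng d1) (lid_rng d2)); move: (eq_leq e); rewrite /sv.
  - by apply: (@kr_le _ _ _ _ (lid_rng d2) (lid_rng d1)); move: (eq_leq (esym e)); rewrite /sv.
have b12 : pblock g d1 = pblock g d2 by apply: rk_inj => //; apply: pb_in.
move: e; rewrite /sv r12 b12 => /addnI e.
by apply: (@lid_inj (pblock g d2)) => //; rewrite ?in_pb // -b12 in_pb.
Qed.

Lemma Psi_val d : (Psi pi g d : nat) = (sv pi g d).-1.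
Proof.
rewrite ffunE val_insubd; have /andP[s0 sN] := sv_bounds d.
by rewrite prednK // sN.
Qed.

Lemma Psi_inj : injective (Psi pi g).
Proof.
move=> d1 d2 /(congr1 val); rewrite /= !Psi_val => e; apply: sv_inj.
have /andP[s1 _] := sv_bounds d1; have /andP[s2 _] := sv_bounds d2.
by rewrite -(prednK s1) -(prednK s2) e.
Qed.

Lemma Psi_P1 : P1 terms (Psi pi g) = Defs.index_size terms setT (sv pi g).
Proof.
rewrite /P1 /Defs.index_size; apply: eq_bigr => t _; congr postings_size.
rewrite /postings /image_mem; congr sort; apply: eq_map => d.
have /andP[s0 _] := sv_bounds d; by rewrite Psi_val prednK.
Qed.

Lemma key d t : t \in terms d ->
  local_id pi (pblock g d) d - \max_(d' in [set x in pblock g d | t \in terms x] | local_id pi (pblock g d) d' < local_id pi (pblock g d) d) local_id pi (pblock g d) d'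
  <= sv pi g d - \max_(d' in [set x in setT | t \in terms x] | sv pi g d' < sv pi g d) sv pi g d'.
Proof.
move=> td; set B := pblock g d.
set M := \max_(d' in _ | _) _.
have HM1 : \max_(d' in [set x in setT | t \in terms x] | sv pi g d' < sv pi g d) sv pi g d'
    <= k * rk pi g B + M.
  apply/bigmax_leqP => d' /andP[d'A lt].
  case: (eqVneq (pblock g d') B) => [eb|nb].
  - move: lt; rewrite /sv eb ltn_add2l => lt; rewrite leq_add2l.
    apply: (leq_bigmax_cond (F := fun x => local_id pi B x)).
    by move: d'A; rewrite !inE /= => ->; rewrite lt !andbT -eb in_pb.
  - have rne : rk pi g (pblock g d') != rk pi g B.
      by apply: contra nb => /eqP e; apply/eqP; apply: rk_inj => //; apply: pb_in.
    have rle : rk pi g (pblock g d') <= rk pi g B.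
      by apply: (@kr_le _ _ _ _ (lid_rng d') (lid_rng d)); apply: ltnW.
    have rlt : rk pi g (pblock g d') < rk pi g B by rewrite ltn_neqAle rne.
    apply: leq_trans (leq_addr _ _); rewrite /sv.
    have /andP[_ lk] := lid_rng d'.
    apply: leq_trans (leq_add (leqnn _) lk) _; rewrite addnC -mulnS leq_mul2l rlt orbT //.
apply: leq_trans (leq_sub2l (sv pi g d) HM1); rewrite /sv -/B subnDl //.
Qed.

Lemma Pm_le : Pm terms pi g <= Defs.index_size terms setT (sv pi g).
Proof.
rewrite /Pm (eq_bigr (fun B => \sum_(t : Term) postings_size (postings terms B (local_id pi B) t)));
  last by move=> B _; rewrite index_sizeE.
rewrite exchange_big index_sizeE; apply: leq_sum => t _.
rewrite postings_sizeE; last by move=> x y _ _; apply: sv_inj.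
apply: (@leq_trans (\sum_(B in g) \sum_(d in B | t \in terms d)
   delta (local_id pi (pblock g d) d - \max_(d' in [set x in pblock g d | t \in terms x] |
      local_id pi (pblock g d) d' < local_id pi (pblock g d) d) local_id pi (pblock g d) d'))).
  apply: eq_leq; apply: eq_bigr => B Bg.
  rewrite postings_sizeE; last by move=> x y; rewrite !inE => /andP[xB _] /andP[yB _]; apply: lid_inj.
  apply: eq_big => [d|d]; first by rewrite inE.
  by rewrite inE => /andP[dB _]; rewrite (pb_def _ _ Bg dB).
rewrite -big_trivIset_cond; last exact: g_triv.
have cov : cover g = setT by case/and3P: g_part => /eqP.
rewrite cov (eq_bigl (fun d => d \in [set x in setT | t \in terms x])); last by move=> d; rewrite !inE.
apply: leq_sum => d; rewrite !inE /= => td.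
by apply: delta_mono; apply: key.
Qed.

End Two.

Section Three.
Variables (Doc : finType).
Local Notation N := #|Doc|.
Local Notation FF := {ffun Doc -> 'I_N}.

Definition actP (a : {perm Doc}) (pi : FF) : FF := [ffun d => pi (a d)].
Definition actB (a : {perm Doc}) (B : {set Doc}) : {set Doc} := ((a^-1)%g @: B).
Definition actG (a : {perm Doc}) (g : {set {set Doc}}) := [set actB a B | B in g].

Lemma memV a (S : {set Doc}) x : (x \in actB a S) = (a x \in S).
Proof. by rewrite /actB -{1}(permK a x) mem_imset //; exact: perm_inj. Qed.

Lemma actB_inj a : injective (actB a).
Proof. by apply: imset_inj; exact: perm_inj. Qed.

Lemma actBK a B : actB (a^-1)%g (actB a B) = B.
Proof. by apply/setP=> x; rewrite !memV permKV. Qed.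

Lemma actPK a pi : actP (a^-1)%g (actP a pi) = pi.
Proof. by apply/ffunP=> d; rewrite !ffunE permKV. Qed.

Lemma actGK a g : actG (a^-1)%g (actG a g) = g.
Proof.
by rewrite /actG -imset_comp (eq_imset _ (actBK a)) imset_id.
Qed.

Lemma actP_inj a : injective (actP a).
Proof. exact: can_inj (actPK a). Qed.
Lemma actG_inj a : injective (actG a).
Proof. exact: can_inj (actGK a). Qed.

Lemma actP_bij a pi : pi \in bijections Doc -> actP a pi \in bijections Doc.
Proof.
rewrite !inE => /injectiveP pinj; apply/injectiveP => x y.
by rewrite !ffunE => /pinj /perm_inj.
Qed.
Lemma actP_bijE a pi : (actP a pi \in bijections Doc) = (pi \in bijections Doc).
Proof.
apply/idP/idP; last exact: actP_bij.
by move/(actP_bij (a^-1)%g); rewrite actPK.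
Qed.

Lemma actB_card a B : #|actB a B| = #|B|.
Proof. by apply: card_imset; exact: perm_inj. Qed.

Lemma actG_eq m a g : g \in equal_partitions Doc m -> actG a g \in equal_partitions Doc m.
Proof.
rewrite !inE => /and3P[pg cg bg]; apply/and3P; split.
- have -> : [set: Doc] = (a^-1)%g @: [set: Doc].
    by apply/setP=> x; rewrite inE -/(actB a _) memV inE.
  by rewrite /actG /actB imset_partition //; exact: perm_inj.
- by rewrite card_imset //; exact: actB_inj.
- apply/forall_inP => B' /imsetP[B Bg ->]; rewrite actB_card.
  by move/forall_inP: bg; apply.
Qed.
Lemma actG_eqE m a g : (actG a g \in equal_partitions Doc m) = (g \in equal_partitions Doc m).
Proof.
apply/idP/idP; last exact: actG_eq.
by move/(@actG_eq m (a^-1)%g); rewrite actGK.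
Qed.

Lemma card_perms : #|{perm Doc}| = N`!.
Proof.
rewrite -cardsT -card_perm; apply: eq_card => s; rewrite inE.
by symmetry; apply/subsetP=> x; rewrite inE.
Qed.

Lemma avg_orbit (H : FF -> nat) tau : tau \in bijections Doc ->
  \sum_(a : {perm Doc}) H (actP a tau) = \sum_(s in bijections Doc) H s.
Proof.
move=> tb; set h := fun a => actP a tau.
have hinj : injective h.
  move=> a b e; apply/permP => d; have /ffunP := e => {}e.
  move: tb; rewrite inE => /injectiveP tinj; apply: tinj.
  by have := e d; rewrite !ffunE.
have E : h @: [set: {perm Doc}] = bijections Doc.
  apply/eqP; rewrite eqEcard; apply/andP; split.
    by apply/subsetP=> s /imsetP[a _ ->]; exact: actP_bij.
  rewrite card_imset // cardsT card_perms /bijections card_inj_ffuns card_ord ffactnn.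
  by [].
rewrite -E big_imset; last by move=> x y _ _; apply: hinj.
by apply: eq_bigl => a; rewrite inE.
Qed.

Lemma reindexP (H : FF -> nat) a :
  \sum_(pi in bijections Doc) H pi = \sum_(pi in bijections Doc) H (actP a pi).
Proof.
rewrite (reindex_inj (actP_inj a)); apply: eq_bigl => pi; exact: actP_bijE.
Qed.
Lemma reindexG m (H : {set {set Doc}} -> nat) a :
  \sum_(g in equal_partitions Doc m) H g = \sum_(g in equal_partitions Doc m) H (actG a g).
Proof.
rewrite (reindex_inj (actG_inj a)); apply: eq_bigl => g; exact: actG_eqE.
Qed.

Lemma avg m (F : FF -> nat) (Phi : FF -> {set {set Doc}} -> FF) :
  (forall pi g, pi \in bijections Doc -> g \in equal_partitions Doc m -> Phi pi g \in bijections Doc) ->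
  (forall a pi g, pi \in bijections Doc -> g \in equal_partitions Doc m ->
     Phi (actP a pi) (actG a g) = actP a (Phi pi g)) ->
  #|{perm Doc}| * \sum_(pi in bijections Doc) \sum_(g in equal_partitions Doc m) F (Phi pi g) =
  \sum_(pi in bijections Doc) \sum_(g in equal_partitions Doc m) \sum_(s in bijections Doc) F s.
Proof.
move=> Pb Pe.
rewrite -sum_nat_const.
transitivity (\sum_(a : {perm Doc}) \sum_(pi in bijections Doc) \sum_(g in equal_partitions Doc m)
   F (actP a (Phi pi g))).
  apply: eq_bigr => a _; rewrite (reindexP _ a); apply: eq_bigr => pi pib.
  rewrite (reindexG _ _ a); apply: eq_bigr => g ge; by rewrite Pe.
rewrite exchange_big; apply: eq_bigr => pi pib.
rewrite exchange_big; apply: eq_bigr => g ge.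
exact: avg_orbit (Pb _ _ pib ge).
Qed.

End Three.

Arguments actB {Doc}. Arguments actG {Doc}. Arguments actP {Doc}.
Arguments memV {Doc}. Arguments actB_inj {Doc}. Arguments actB_card {Doc}. Arguments actBK {Doc}.
Arguments actG_eq {Doc}. Arguments mx {Doc}. Arguments rk {Doc}. Arguments sv {Doc}. Arguments Psi {Doc}.
Section Four.
Variables (Doc : finType) (m : nat).
Local Notation N := #|Doc|.
Local Notation FF := {ffun Doc -> 'I_N}.

Lemma actBK' (a : {perm Doc}) X : actB a (actB (a^-1)%g X) = X.
Proof. by apply/setP=> x; rewrite !memV permK. Qed.

Lemma memG (a : {perm Doc}) (S : {set {set Doc}}) X :
  (X \in actG a S) = (actB (a^-1)%g X \in S).
Proof. by rewrite -{1}(actBK' a X) mem_imset //; exact: actB_inj. Qed.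

Lemma lidE (a : {perm Doc}) (pi : FF) B d :
  local_id (actP a pi) (actB a B) d = local_id pi B (a d).
Proof.
rewrite /local_id -(actB_card a [set e in B | (pi e <= pi (a d))%N]); apply: eq_card => x.
by rewrite memV !inE memV !ffunE.
Qed.

Lemma mxE (a : {perm Doc}) (pi : FF) B : mx (actP a pi) (actB a B) = mx pi B.
Proof.
rewrite /mx /actB big_imset /=; last by move=> x y _ _; apply: perm_inj.
by apply: eq_bigr => e _; rewrite ffunE permKV.
Qed.

Lemma rkE (a : {perm Doc}) (pi : FF) g B :
  rk (actP a pi) (actG a g) (actB a B) = rk pi g B.
Proof.
rewrite /rk -[RHS](card_imset _ (actB_inj a)); apply: eq_card => X.
rewrite inE memG mxE -{2}(actBK' a X) mxE.
apply/idP/imsetP => [h | [Y Yh ->]].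
  by exists (actB (a^-1)%g X); rewrite ?inE ?actBK'.
by rewrite actBK; move: Yh; rewrite inE.
Qed.

Lemma pbE (a : {perm Doc}) g d : g \in equal_partitions Doc m ->
  pblock (actG a g) d = actB a (pblock g (a d)).
Proof.
move=> ge; apply: def_pblock.
- have := @g_part _ _ _ (actG_eq m a g ge); by case/and3P.
- by apply: imset_f; apply: (@pb_in _ _ _ ge).
- by rewrite memV; apply: (@in_pb _ _ _ ge).
Qed.

Lemma PsiE (a : {perm Doc}) (pi : FF) g : g \in equal_partitions Doc m ->
  Psi m (actP a pi) (actG a g) = actP a (Psi m pi g).
Proof.
move=> ge; apply/ffunP => d; by rewrite !ffunE /sv pbE // lidE rkE.
Qed.

End Four.

Lemma sums_le (Doc Term : finType) (terms : Doc -> {set Term}) (m : nat) :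
  (0 < m)%N ->
  (\sum_(pi in bijections Doc) \sum_(g in equal_partitions Doc m) Pm terms pi g <=
   \sum_(pi in bijections Doc) \sum_(g in equal_partitions Doc m) P1 terms pi)%N.
Proof.
move=> m_pos.
have [N0 | N_pos] := posnP #|Doc|.
  apply: leq_trans (leq0n _); rewrite leqn0; apply/eqP.
  apply: big1 => pi _; apply: big1 => g _; rewrite /Pm big1 // => B _.
  rewrite /Defs.index_size big1 // => t /bigcupP[d _ _].
  by move: N0; rewrite (cardD1 d).
apply: (@leq_trans (\sum_(pi in bijections Doc) \sum_(g in equal_partitions Doc m)
   P1 terms (Psi m pi g))).
  apply: leq_sum => pi; rewrite inE => /injectiveP pinj.
  apply: leq_sum => g ge.
  by rewrite (@Psi_P1 _ _ _ _ _ _ ge); apply: Pm_le.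
rewrite -(@leq_pmul2l #|{perm Doc}|); last by rewrite card_perms fact_gt0.
have H1 : forall pi g, pi \in bijections Doc -> g \in equal_partitions Doc m ->
    Psi m pi g \in bijections Doc.
  move=> pi g pb ge; move: pb; rewrite inE => /injectiveP pinj; rewrite inE; apply/injectiveP.
  exact: Psi_inj.
have H2 : forall a pi g, pi \in bijections Doc -> g \in equal_partitions Doc m ->
    Psi m (actP a pi) (actG a g) = actP a (Psi m pi g).
  by move=> a pi g _ ge; apply: PsiE.
rewrite (@avg _ _ (P1 terms) (Psi m) H1 H2).
by rewrite (@avg _ _ (P1 terms) (fun pi g => pi)).
Qed.

Local Open Scope ring_scope.

Theorem mainTheorem2 (Doc Term : finType) (terms : Doc -> {set Term})
  (terms_inj : injective terms) (m : nat)
  (m_pos : (0 < m)%N) (m_dvd : (m %| #|Doc|)%N) :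
  0 <= expected_gain terms m.
Proof.
rewrite /expected_gain divr_ge0 //.
rewrite (eq_bigr (fun pi => \sum_(g in equal_partitions Doc m) ((P1 terms pi)%:R : rat)
   - \sum_(g in equal_partitions Doc m) ((Pm terms pi g)%:R : rat))); last first.
  by move=> pi _; rewrite sumrB.
rewrite sumrB subr_ge0.
have := @sums_le Doc Term terms m m_pos; rewrite -(ler_nat rat) !natr_sum.
by under eq_bigr => pi _ do rewrite natr_sum; under [X in _ <= X -> _]eq_bigr => pi _ do rewrite natr_sum.
Qed.
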